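(* Let there be $p$ predictors $X_1,\dots,X_p$ and let $\widehat{m}^{(1)},\dots,\widehat{m}^{(B)}\subseteq\{1,\dots,p\}$ be bootstrap models, i.e. independent realizations of a random selected model. Fix a width $w\in\{0,\dots,p\}$. Let $\{\widehat{m}_{L,1},\widehat{m}_{U,1}\}$ be a maximizer of $\widehat{r}(m_1,m_2)$ over all pairs with $m_1\subseteq m_2\subseteq\{1,\dots,p\}$ and $|m_2|-|m_1|=w$ (Algorithm 1). Let $\overline{\pi}_j=\frac1B\sum_{b=1}^B I(j\in\widehat{m}^{(b)})$, let $(u_1,\dots,u_p)$ be the ordering of $\{1,\dots,p\}$ with $\overline{\pi}_{u_1}>\cdots>\overline{\pi}_{u_p}$ (assuming no ties), and let $\{\widehat{m}_{L,2},\widehat{m}_{U,2}\}=\{\{u_1,\dots,u_{k^\ast}\},\{u_1,\dots,u_{k^\ast+w}\}\}$ where $k^\ast$ maximizes $\widehat{r}(\{u_1,\dots,u_k\},\{u_1,\dots,u_{k+w}\})$ over $0\le k\le p-w$ (Algorithm 2). Assume (A.3): the events $I(X_j)$, $j=1,\dots,p$, are mutually independent, where $I(X_j)$ denotes the event that $X_j$ is selected in the model (i.e. $j$ belongs to the random selected model). Then, as $B\to\infty$, $$\left|\widehat{r}(\widehat{m}_{L,1},\widehat{m}_{U,1})-\widehat{r}(\widehat{m}_{L,2},\widehat{m}_{U,2})\right|=o_p(1).$$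
   Context: Models are identified with index sets of predictors, i.e. subsets of $\{1,\dots,p\}$; $|m|$ denotes cardinality. For nested models $m_1\subseteq m_2$, the bootstrap coverage rate is $\widehat{r}(m_1,m_2)=\frac1B\sum_{b=1}^B I(m_1\subseteq\widehat{m}^{(b)}\subseteq m_2)$, with $I(\cdot)$ the indicator function. *)

(* Defs.v *)
From HB Require Import structures.
From mathcomp Require Import all_boot all_order all_algebra all_fingroup.
From mathcomp Require Import all_classical all_reals all_analysis.
Set Implicit Arguments. Unset Strict Implicit. Unset Printing Implicit Defensive.
Import Order.TTheory GRing.Theory Num.Theory.
Local Open Scope ring_scope.

(* Models are subsets of {1,..,p}, represented as {set 'I_p}.
   A random selected model has distribution P : {ffun {set 'I_p} -> R}. *)

Definition is_distr (R : realType) (p : nat) (P : {ffun {set 'I_p} -> R}) :=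
  (forall m, 0 <= P m) /\ \sum_(m : {set 'I_p}) P m = 1.

Definition selection_events_indep (R : realType) (p : nat)
  (P : {ffun {set 'I_p} -> R}) :=
  forall S : {set 'I_p},
    \sum_(m : {set 'I_p} | S \subset m) P m
    = \prod_(j in S) \sum_(m : {set 'I_p} | j \in m) P m.

Definition boot_prob (R : realType) (p : nat) (P : {ffun {set 'I_p} -> R})
  (B : nat) (E : pred (B.-tuple {set 'I_p})) : R :=
  \sum_(s : B.-tuple {set 'I_p} | E s) \prod_(b < B) P (tnth s b).

Definition rhat (R : realType) (p B : nat) (s : B.-tuple {set 'I_p})
  (m1 m2 : {set 'I_p}) : R :=
  (\sum_(b < B) ((m1 \subset tnth s b) && (tnth s b \subset m2))%:R) / B%:R.

Definition pibar (R : realType) (p B : nat) (s : B.-tuple {set 'I_p}) (j : 'I_p) : R :=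
  (\sum_(b < B) (j \in tnth s b)%:R) / B%:R.

Definition alg1_maximizer (R : realType) (p B w : nat) (s : B.-tuple {set 'I_p})
  (mLU : {set 'I_p} * {set 'I_p}) : Prop :=
  [/\ mLU.1 \subset mLU.2, #|mLU.2| = (#|mLU.1| + w)%N &
   forall m1 m2 : {set 'I_p}, m1 \subset m2 -> #|m2| = (#|m1| + w)%N ->
     rhat R s m1 m2 <= rhat R s mLU.1 mLU.2].

(* u is an ordering u_1,..,u_p (here u 0, .., u (p-1)) of {1..p} by
   nonincreasing pi-bar (strictly decreasing when there are no ties) *)
Definition ordered_by_pibar (R : realType) (p B : nat) (s : B.-tuple {set 'I_p})
  (u : 'S_p) : Prop :=
  forall i j : 'I_p, (i < j)%N -> pibar R s (u j) <= pibar R s (u i).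

Definition top_set (p : nat) (u : 'S_p) (k : nat) : {set 'I_p} :=
  u @: [set i : 'I_p | (i < k)%N].

Definition alg2_kstar (R : realType) (p B w : nat) (s : B.-tuple {set 'I_p})
  (u : 'S_p) (k : nat) : Prop :=
  (k <= p - w)%N /\
  forall k', (k' <= p - w)%N ->
    rhat R s (top_set u k') (top_set u (k' + w)) <= rhat R s (top_set u k) (top_set u (k + w)).

(* Main.v *)
Require Import Defs.
From HB Require Import structures.
From mathcomp Require Import all_boot all_order all_algebra all_fingroup.
From mathcomp Require Import all_classical all_reals all_analysis.
From mathcomp Require Import ring lra.
Import Order.TTheory GRing.Theory Num.Theory numFieldNormedType.Exports.
Local Open Scope ring_scope.
Set Implicit Arguments. Unset Strict Implicit. Unset Printing Implicit Defensive.

Lemma prod_tuple (R : comNzRingType) (T : finType) (B : nat) (G : 'I_B -> T -> R) :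
 \sum_(s : B.-tuple T) \prod_(b < B) G b (tnth s b) = \prod_(b < B) \sum_(t : T) G b t.
Proof.
rewrite bigA_distr_bigA /=.
rewrite (reindex (fun f : {ffun 'I_B -> T} => [tuple f i | i < B])) /=.
  by apply: eq_bigr => f _; apply: eq_bigr => b _; rewrite tnth_mktuple.
exists (fun s : B.-tuple T => [ffun i => tnth s i]) => [f _|s _].
  by apply/ffunP => i; rewrite ffunE tnth_mktuple.
by apply: eq_from_tnth => i; rewrite tnth_mktuple ffunE.
Qed.

Lemma mom2 (R : comNzRingType) (T : finType) (B : nat) (P : T -> R) (hP : \sum_t P t = 1)
  (b c : 'I_B) (g h : T -> R) :
  \sum_(s : B.-tuple T) (\prod_(d < B) P (tnth s d)) * ((if b == c then g (tnth s b) * h (tnth s b) else g (tnth s b) * h (tnth s c)))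
  = if b == c then \sum_t P t * (g t * h t) else (\sum_t P t * g t) * (\sum_t P t * h t).
Proof.
have E : forall s : B.-tuple T, (\prod_(d < B) P (tnth s d)) * (if b == c then g (tnth s b) * h (tnth s b) else g (tnth s b) * h (tnth s c))
   = \prod_(d < B) (P (tnth s d) * ((if d == b then g (tnth s d) else 1) * (if d == c then h (tnth s d) else 1))).
  move=> s; rewrite big_split /= big_split /= -!big_mkcond /= !big_pred1_eq.
  by case: eqP => // ->.
under eq_bigr => s _ do rewrite E.
rewrite (prod_tuple (fun d t => P t * ((if d == b then g t else 1) * (if d == c then h t else 1)))) (bigD1 b) //=.
have Hd : forall d, d != b -> d != c -> \sum_t P t * ((if d == b then g t else 1) * (if d == c then h t else 1)) = 1.
  by move=> d /negPf -> /negPf ->; under eq_bigr do rewrite !mulr1.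
case: (eqVneq b c) => [<-|nbc]; last have ncb : c != b by rewrite eq_sym.
  rewrite eqxx [X in _ * X = _]big1 ?mulr1 // => d /negPf db; rewrite db.
  by under eq_bigr do rewrite !mulr1.
rewrite (bigD1 c) 1?eq_sym //= eqxx (negPf nbc) ?(negPf ncb) [X in _ * (_ * X) = _]big1 ?mulr1.
  all: try by move=> d /andP[db dc]; apply: Hd.
  by congr (_ * _); apply: eq_bigr => t _; rewrite ?eqxx ?mulr1 ?mul1r.
Qed.

Section Cheb.
Variables (R : realType) (T : finType) (P : T -> R).
Hypothesis hP0 : forall t, 0 <= P t.
Hypothesis hP1 : \sum_t P t = 1.

Definition freq B (A : pred T) (s : B.-tuple T) : R := (\sum_(b < B) (A (tnth s b))%:R) / B%:R.
Definition qA (A : pred T) : R := \sum_(t | A t) P t.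
Definition bprob B (E : pred (B.-tuple T)) : R := \sum_(s : B.-tuple T | E s) \prod_(b < B) P (tnth s b).

Lemma qA_ge0 (A : pred T) : 0 <= qA A.
Proof. by apply: sumr_ge0 => t _; apply: hP0. Qed.

Lemma qA_le1 (A : pred T) : qA A <= 1.
Proof.
rewrite -hP1 /qA [X in _ <= X](bigID A) /= lerDl.
by apply: sumr_ge0 => t _; apply: hP0.
Qed.

Lemma sumPA (A : pred T) : \sum_t P t * (A t)%:R = qA A.
Proof. by rewrite /qA [RHS]big_mkcond /=; apply: eq_bigr => t _; case: (A t); rewrite ?mulr1 ?mulr0. Qed.

Lemma w_ge0 B (s : B.-tuple T) : 0 <= \prod_(b < B) P (tnth s b).
Proof. by apply: prodr_ge0 => b _; apply: hP0. Qed.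

Lemma cheb B (hB : (0 < B)%N) (A : pred T) (d : R) (hd : 0 < d) :
  bprob (fun s : B.-tuple T => d <= `|freq A s - qA A|) <= (d ^+ 2 * B%:R)^-1.
Proof.
have hq0 := qA_ge0 A; have hq1 := qA_le1 A.
set q := qA A.
set X := fun t => (A t)%:R - q.
have hX2 : forall t, X t * X t <= 1.
  move=> t; rewrite /X; have hh : 0 <= q * (1 - q) by apply: mulr_ge0 => //; rewrite subr_ge0.
  by case: (A t) => /=; rewrite ?mulr1n ?mulr0n; nra.
have hEX : \sum_t P t * X t = 0.
  rewrite /X; under eq_bigr do rewrite mulrBr.
  by rewrite sumrB sumPA -mulr_suml hP1 mul1r subrr.
have hBn : (B%:R : R) != 0 by rewrite pnatr_eq0 -lt0n.
have key : forall s : B.-tuple T, freq A s - q = (\sum_(b < B) X (tnth s b)) / B%:R.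
  move=> s; rewrite /freq /X sumrB sumr_const card_ord mulrBl; congr (_ - _).
  by rewrite -[q *+ B]mulr_natr mulfK.
have var : \sum_(s : B.-tuple T) (\prod_(b < B) P (tnth s b)) * (\sum_(b < B) X (tnth s b)) ^+ 2 <= B%:R.
  have E1 : forall s : B.-tuple T, (\prod_(b < B) P (tnth s b)) * (\sum_(b < B) X (tnth s b)) ^+ 2
     = \sum_(b < B) \sum_(c < B) (\prod_(d < B) P (tnth s d)) * (if b == c then X (tnth s b) * X (tnth s b) else X (tnth s b) * X (tnth s c)).
    move=> s; rewrite expr2 mulr_suml mulr_sumr; apply: eq_bigr => b _.
    rewrite mulr_sumr mulr_sumr; apply: eq_bigr => c _.
    by case: eqP => [->|_]; rewrite mulrA.
  under eq_bigr do rewrite E1.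
  rewrite exchange_big /=.
  under eq_bigr do rewrite exchange_big /=.
  apply: (@le_trans _ _ (\sum_(b < B) \sum_(c < B) (b == c)%:R)).
    apply: ler_sum => b _; apply: ler_sum => c _.
    rewrite (@mom2 R T B P hP1 b c X X).
    case: (b == c) => /=.
      rewrite -hP1; apply: ler_sum => t _.
      by rewrite -[X in _ <= X]mulr1; apply: ler_wpM2l; [apply: hP0 | apply: hX2].
    by rewrite hEX mul0r.
  have -> : \sum_(b < B) \sum_(c < B) ((b == c)%:R : R) = \sum_(b < B) 1.
    apply: eq_bigr => b _; rewrite (bigD1 b) //= eqxx big1 ?addr0 //.
    by move=> c /negPf; rewrite eq_sym => ->.
  by rewrite sumr_const card_ord.
rewrite /bprob.
have dd : 0 < d ^+ 2 by rewrite exprn_gt0.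
apply: (@le_trans _ _ (\sum_(s : B.-tuple T | d <= `|freq A s - qA A|)
   (\prod_(b < B) P (tnth s b)) * ((freq A s - q) ^+ 2 / d ^+ 2))).
  apply: ler_sum => s hs.
  rewrite -[X in X <= _]mulr1; apply: ler_wpM2l; first exact: w_ge0.
  rewrite ler_pdivlMr // mul1r -[(freq A s - q) ^+ 2]real_normK ?num_real //.
  by rewrite lerXn2r ?nnegrE ?normr_ge0 ?(ltW hd).
apply: (@le_trans _ _ (\sum_(s : B.-tuple T)
   (\prod_(b < B) P (tnth s b)) * ((freq A s - q) ^+ 2 / d ^+ 2))).
  rewrite [X in _ <= X](bigID (fun s : B.-tuple T => d <= `|freq A s - qA A|)) /= lerDl.
  apply: sumr_ge0 => s _; apply: mulr_ge0; first exact: w_ge0.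
  by apply: divr_ge0; [apply: sqr_ge0 | apply: ltW].
have hB0 : (0 : R) < B%:R by rewrite ltr0n.
have hd0 : d != 0 by rewrite gt_eqF.
have -> : \sum_(s : B.-tuple T) (\prod_(b < B) P (tnth s b)) * ((freq A s - q) ^+ 2 / d ^+ 2)
   = (\sum_(s : B.-tuple T) (\prod_(b < B) P (tnth s b)) * (\sum_(b < B) X (tnth s b)) ^+ 2) / (d ^+ 2 * B%:R ^+ 2).
  rewrite mulr_suml; apply: eq_bigr => s _; rewrite key; field.
  by rewrite hd0 hBn.
rewrite ler_pdivrMr; last by apply: mulr_gt0; rewrite exprn_gt0.
have -> : (d ^+ 2 * B%:R)^-1 * (d ^+ 2 * B%:R ^+ 2) = B%:R.
  by field; rewrite hd0 hBn.
exact: var.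
Qed.

Lemma union_bound (I : finType) B (E : pred (B.-tuple T)) (Ei : I -> pred (B.-tuple T)) :
  (forall s, E s -> exists i, Ei i s) -> bprob E <= \sum_i bprob (Ei i).
Proof.
move=> hE; rewrite /bprob.
apply: (@le_trans _ _ (\sum_(s : B.-tuple T | E s) (\prod_(b < B) P (tnth s b)) * \sum_i ((Ei i s)%:R : R))).
  apply: ler_sum => s hs; rewrite -[X in X <= _]mulr1; apply: ler_wpM2l; first exact: w_ge0.
  have [i hi] := hE s hs.
  rewrite (bigD1 i) //= hi lerDl; apply: sumr_ge0 => j _; exact: ler0n.
apply: (@le_trans _ _ (\sum_(s : B.-tuple T) (\prod_(b < B) P (tnth s b)) * \sum_i ((Ei i s)%:R : R))).
  rewrite [X in _ <= X](bigID E) /= lerDl.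
  apply: sumr_ge0 => s _; apply: mulr_ge0; first exact: w_ge0.
  by apply: sumr_ge0 => j _; exact: ler0n.
under eq_bigr do rewrite mulr_sumr.
rewrite exchange_big /=; apply: ler_sum => i _.
rewrite [X in _ <= X]big_mkcond /=; apply: ler_sum => s _.
by case: (Ei i s); rewrite ?mulr1 ?mulr0.
Qed.

Lemma bprob_ge0 B (E : pred (B.-tuple T)) : 0 <= bprob E.
Proof. by apply: sumr_ge0 => s _; exact: w_ge0. Qed.

Local Open Scope classical_set_scope.
Lemma cvg_bound (I : finType) (A : I -> pred T) (dl : I -> R) (hdl : forall i, 0 < dl i)
  (E : forall B, pred (B.-tuple T))
  (hE : forall B s, E B s -> exists i, dl i <= `|freq (A i) s - qA (A i)|) :
  (fun B => bprob (E B)) @ \oo --> (0 : R).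
Proof.
set K := \sum_i (dl i ^+ 2)^-1.
have K0 : 0 <= K by apply: sumr_ge0 => i _; rewrite invr_ge0 exprn_ge0 // ltW.
have bnd : forall B, (0 < B)%N -> bprob (E B) <= K / B%:R.
  move=> B hB.
  apply: le_trans (@union_bound I B (E B) (fun i s => dl i <= `|freq (A i) s - qA (A i)|) (hE B)) _.
  rewrite /K mulr_suml; apply: ler_sum => i _.
  by rewrite -invfM; apply: cheb.
apply/cvgrPdist_lt => e e0.
have := nbhs_infty_ger (K / e + 1); apply: filterS => B hB.
have Bpos : (0 : R) < B%:R by apply: lt_le_trans hB; rewrite ltr_pwDr // divr_ge0 // ltW.
have hB1 : (0 < B)%N by rewrite -(ltr0n R).
rewrite sub0r normrN ger0_norm; last exact: bprob_ge0.
apply: le_lt_trans (bnd B hB1) _.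
rewrite ltr_pdivrMr // -ltr_pdivrMl //.
by apply: lt_le_trans hB; rewrite mulrC ltrDl.
Qed.

End Cheb.


Lemma prod_top (R : realType) (p : nat) (f : 'I_p -> R) (f0 : forall j, 0 <= f j)
  (S T : {set 'I_p}) : #|S| = #|T| ->
  (forall x y, x \in T -> y \notin T -> f y <= f x) ->
  \prod_(j in S) f j <= \prod_(j in T) f j.
Proof.
move=> hST hf.
rewrite (big_setID T) [X in _ <= X](big_setID S) /= finset.setIC.
apply: ler_wpM2l; first by apply: prodr_ge0 => j _; apply: f0.
have hc : #|S :\: T| = #|T :\: S| by rewrite !cardsD hST finset.setIC.
case: (set_0Vmem (T :\: S)) => [h0|[x0 hx0]].
  move: hc; rewrite h0 cards0 => /cards0_eq ->.
  by rewrite !big_set0.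
case: (@arg_minP _ _ _ x0 (mem (T :\: S)) f hx0) => x hx hmin.
apply: (@le_trans _ _ (f x ^+ #|S :\: T|)).
  rewrite -prodr_const; apply: ler_prod => y hy; rewrite f0 /=.
  have hx1 : x \in T :\: S := hx.
  by apply: hf; [move: hx1; rewrite inE => /andP[] | move: hy; rewrite inE => /andP[]].
rewrite hc -prodr_const; apply: ler_prod => y hy; rewrite f0 /=.
exact: hmin.
Qed.

Lemma prod_ind (R : realType) p (A M : {set 'I_p}) :
  \prod_(i in A) ((i \in M)%:R : R) = (A \subset M)%:R.
Proof.
case: (boolP (A \subset M)) => h.
  by apply: big1 => i hi; rewrite (fintype.subsetP h i hi).
have [i hiA hiM] := fintype.subsetPn h.
by rewrite (bigD1 i) //= (negPf hiM) mul0r.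
Qed.

Definition pincl (R : realType) p (P : {ffun {set 'I_p} -> R}) (j : 'I_p) : R :=
  qA P (fun m => j \in m).

Section Prod.
Variables (R : realType) (p : nat) (P : {ffun {set 'I_p} -> R}).
Hypothesis hA3 : selection_events_indep P.
Variables (m1 m2 : {set 'I_p}).
Hypothesis h12 : m1 \subset m2.

Let c (i : 'I_p) : R := if i \in m2 then 0 else -1.

Lemma expand (y : 'I_p -> R) :
  \prod_i (1 + c i * y i) = \sum_(J : {set 'I_p}) (\prod_(i in J) c i) * \prod_(i in J) y i.
Proof.
rewrite (eq_bigr (fun i => c i * y i + 1)); last by move=> i _; rewrite addrC.
rewrite bigA_distr; apply: eq_bigr => J _.
by rewrite -big_mkcond big_split.
Qed.

Lemma conv (y : 'I_p -> R) :
  \prod_i (1 + c i * y i) = \prod_(i in ~: m2) (1 - y i).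
Proof.
rewrite [RHS]big_mkcond; apply: eq_bigr => i _; rewrite inE /c.
by case: (i \in m2) => /=; rewrite ?mul0r ?addr0 ?mulN1r.
Qed.

Lemma rr_prod :
  qA P (fun m => (m1 \subset m) && (m \subset m2))
  = (\prod_(j in m1) pincl P j) * \prod_(j in ~: m2) (1 - pincl P j).
Proof.
rewrite -sumPA.
have E1 : forall M : {set 'I_p}, P M * ((m1 \subset M) && (M \subset m2))%:R
   = \sum_(J : {set 'I_p}) (\prod_(i in J) c i) * (P M * ((m1 :|: J) \subset M)%:R).
  move=> M.
  have -> : ((m1 \subset M) && (M \subset m2))%:R
     = (\prod_(i in m1) ((i \in M)%:R : R)) * \prod_i (1 + c i * (i \in M)%:R).
    rewrite conv prod_ind.
    have -> : \prod_(i in ~: m2) (1 - ((i \in M)%:R : R)) = \prod_(i in ~: m2) ((i \in ~: M)%:R : R).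
      by apply: eq_bigr => i _; rewrite inE; case: (i \in M); rewrite /= ?subrr ?subr0.
    rewrite prod_ind finset.setCS.
    by case: (m1 \subset M); case: (M \subset m2); rewrite /= ?mul1r ?mul0r.
  rewrite expand mulr_sumr mulr_sumr; apply: eq_bigr => J _.
  rewrite !prod_ind finset.subUset.
  by case: (m1 \subset M); case: (J \subset M); rewrite /=; ring.
rewrite (eq_bigr _ (fun M _ => E1 M)).
rewrite exchange_big /=.
rewrite -(conv (pincl P)) expand mulr_sumr; apply: eq_bigr => J _.
rewrite -mulr_sumr sumPA /qA hA3.
have [dis|ndis] := boolP [disjoint m1 & J].
  rewrite [RHS]mulrCA; congr (_ * _); rewrite /pincl /qA -bigU //.
  by apply: eq_bigl => i; rewrite !inE.
have [i hi1 hiJ] : exists2 i, i \in m1 & i \in J.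
  by move/pred0Pn: ndis => [i /andP[]]; exists i.
have -> : \prod_(i in J) c i = 0.
  by rewrite (bigD1 i) //= /c (fintype.subsetP h12 i hi1) mul0r.
by rewrite !mul0r mulr0.
Qed.
End Prod.

Lemma top_mem p (u : 'S_p) k x : (x \in top_set u k) = ((u^-1)%g x < k)%N.
Proof.
apply/imsetP/idP => [[i hi ->]|h].
  by rewrite permK; move: hi; rewrite inE.
by exists ((u^-1)%g x); rewrite ?inE ?permKV.
Qed.

Lemma card_lt_ord p k : (k <= p)%N -> #|[set i : 'I_p | (i < k)%N]| = k.
Proof.
move=> hk.
have -> : [set i : 'I_p | (i < k)%N] = widen_ord hk @: [set: 'I_k].
  apply/setP => i; rewrite inE; apply/idP/imsetP => [hi|[j _ ->]]; last exact: (ltn_ord j).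
  by exists (Ordinal hi) => //; apply: val_inj.
rewrite card_imset ?cardsT ?card_ord //.
by move=> a b /(congr1 val) /= /val_inj.
Qed.

Lemma top_card p (u : 'S_p) k : (k <= p)%N -> #|top_set u k| = k.
Proof. by move=> hk; rewrite card_imset ?card_lt_ord //; exact: perm_inj. Qed.

Lemma top_sub p (u : 'S_p) k w : top_set u k \subset top_set u (k + w).
Proof.
apply/fintype.subsetP => x; rewrite !top_mem => h.
exact: leq_trans h (leq_addr _ _).
Qed.

Lemma top_ord (R : realType) p (u : 'S_p) (f : 'I_p -> R)
  (hu : forall i j : 'I_p, (i < j)%N -> f (u j) <= f (u i)) k x y :
  x \in top_set u k -> y \notin top_set u k -> f y <= f x.
Proof.
rewrite !top_mem -leqNgt => hx hy.
rewrite -(permKV u x) -(permKV u y); apply: hu.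
exact: leq_trans hx hy.
Qed.

Lemma pop_le (R : realType) p (P : {ffun {set 'I_p} -> R})
  (hP0 : forall t, 0 <= P t) (hP1 : \sum_t P t = 1) (hA3 : selection_events_indep P)
  (u : 'S_p) (hu : forall i j : 'I_p, (i < j)%N -> pincl P (u j) <= pincl P (u i))
  w (m1 m2 : {set 'I_p}) (h12 : m1 \subset m2) (hc : #|m2| = (#|m1| + w)%N) :
  qA P (fun m => (m1 \subset m) && (m \subset m2))
  <= qA P (fun m => (top_set u #|m1| \subset m) && (m \subset top_set u (#|m1| + w))).
Proof.
have hk : (#|m1| + w <= p)%N by rewrite -hc; apply: leq_trans (max_card (mem m2)) _; rewrite card_ord.
have hk1 : (#|m1| <= p)%N by apply: leq_trans hk; exact: leq_addr.
rewrite !rr_prod //; last exact: top_sub.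
have pi0 : forall j, 0 <= pincl P j by move=> j; apply: qA_ge0.
have pi1 : forall j, pincl P j <= 1 by move=> j; apply: qA_le1.
apply: ler_pM.
- by apply: prodr_ge0 => j _.
- by apply: prodr_ge0 => j _; rewrite subr_ge0.
- apply: prod_top => //; first by rewrite top_card.
  exact: top_ord.
- apply: prod_top => [j||]; first by rewrite subr_ge0.
    by apply/eqP; rewrite -(eqn_add2l #|m2|) cardsC hc -{1}(top_card u hk) cardsC.
  move=> x y; rewrite !inE negbK => hx hy.
  by rewrite lerD2l lerN2; apply: (top_ord hu hy hx).
Qed.


Unset Implicit Arguments.
Local Open Scope classical_set_scope.
Local Open Scope ring_scope.

Theorem theorem2 (R : realType) (p w : nat) (hw : (w <= p)%N)
  (P : {ffun {set 'I_p} -> R}) (hP : is_distr P)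
  (hA3 : selection_events_indep P)
  (alg1 : forall B : nat, B.-tuple {set 'I_p} -> {set 'I_p} * {set 'I_p})
  (halg1 : forall B (s : B.-tuple {set 'I_p}), alg1_maximizer R w s (alg1 B s))
  (u : forall B : nat, B.-tuple {set 'I_p} -> 'S_p)
  (hu : forall B (s : B.-tuple {set 'I_p}), ordered_by_pibar R s (u B s))
  (kstar : forall B : nat, B.-tuple {set 'I_p} -> nat)
  (hk : forall B (s : B.-tuple {set 'I_p}), alg2_kstar R w s (u B s) (kstar B s)) :
  forall eps : R, 0 < eps ->
    (fun B : nat => boot_prob P
       (fun s : B.-tuple {set 'I_p} =>
          eps < `| rhat R s (alg1 B s).1 (alg1 B s).2
                   - rhat R s (top_set (u B s) (kstar B s))
                              (top_set (u B s) (kstar B s + w)) |))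
    @ \oo --> (0 : R).
Proof.
move=> eps heps.
case: hP => hP0 hP1.
pose I := (({set 'I_p} * {set 'I_p}) + ('I_p * 'I_p * bool))%type.
pose A (i : I) : pred {set 'I_p} := match i with
  | inl (m1, m2) => fun m => (m1 \subset m) && (m \subset m2)
  | inr (a, b, c) => fun m => (if c then a else b) \in m end.
pose dl (i : I) : R := match i with
  | inl _ => eps / 2
  | inr (a, b, _) => if pincl P b < pincl P a then (pincl P a - pincl P b) / 2 else 1 end.
have hdl : forall i, 0 < dl i.
  case=> [[m1 m2]|[[a b] c]] /=; first by rewrite divr_gt0.
  by case: ifP => // h; rewrite divr_gt0 // subr_gt0.
apply: (@cvg_bound R _ P hP0 hP1 I A dl hdl).
move=> B s hs.
case: (pselect (exists i, dl i <= `|freq R (A i) s - qA P (A i)|)) => // hne.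
exfalso.
have H : forall i, `|freq R (A i) s - qA P (A i)| < dl i.
  by move=> i; rewrite ltNge; apply/negP => h; apply: hne; exists i.
have Hr : forall m1 m2, `|rhat R s m1 m2 - qA P (fun m => (m1 \subset m) && (m \subset m2))| < eps / 2.
  by move=> m1 m2; exact: (H (inl (m1, m2))).
have Hu : forall i j : 'I_p, (i < j)%N -> pincl P (u B s j) <= pincl P (u B s i).
  move=> i j hij; rewrite leNgt; apply/negP => hlt.
  have h1 := H (inr (u B s j, u B s i, true)).
  have h2 := H (inr (u B s j, u B s i, false)).
  rewrite /dl /A /= hlt in h1 h2.
  have h3 := hu B s i j hij.
  have key : forall (x y qa qb : R), x <= y -> `|x - qa| < (qa - qb) / 2 ->
      `|y - qb| < (qa - qb) / 2 -> qb < qa -> False.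
    move=> x y qa qb hxy; rewrite !ltr_norml => /andP[? ?] /andP[? ?] ?; lra.
  exact: (key _ _ _ _ h3 h1 h2 hlt).
case: (halg1 B s) => hLU hcard hmax.
case: (hk B s) => hks hkmax.
have hks' : (kstar B s + w <= p)%N by rewrite -(subnK hw) leq_add2r.
have hks1 : (kstar B s <= p)%N by apply: leq_trans hks'; exact: leq_addr.
have a : rhat R s (top_set (u B s) (kstar B s)) (top_set (u B s) (kstar B s + w))
    <= rhat R s (alg1 B s).1 (alg1 B s).2.
  apply: hmax; first exact: top_sub.
  by rewrite (top_card _ hks') (top_card _ hks1).
have k0p : (#|(alg1 B s).1| <= p - w)%N.
  have := max_card (mem (alg1 B s).2); rewrite card_ord hcard => h.
  by rewrite leq_subRL // addnC.
have b1 := Hr (alg1 B s).1 (alg1 B s).2.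
have b2 := pop_le hP0 hP1 hA3 Hu hLU hcard.
have b3 := Hr (top_set (u B s) #|(alg1 B s).1|) (top_set (u B s) (#|(alg1 B s).1| + w)).
have b4 := hkmax _ k0p.
have key : forall r1 r2 q1 q3 r3 : R, r2 <= r1 -> `|r1 - q1| < eps / 2 -> q1 <= q3 ->
    `|r3 - q3| < eps / 2 -> r3 <= r2 -> eps < `|r1 - r2| -> False.
  move=> r1 r2 q1 q3 r3 h21; rewrite !ltr_norml (ger0_norm (x := r1 - r2)) ?subr_ge0 //.
  move=> /andP[? ?] ? /andP[? ?] ? ?; lra.
exact: (key _ _ _ _ _ a b1 b2 b3 b4 hs).
Qed.
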